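(* Let $n\times n$ $(0,1)$ matrices $A=\begin{bmatrix} 0 & J_{k_1,k_2} & X_1\\ J_{k_1,k_2} & 0 & X_2\\ X_3 & X_4 & Y\end{bmatrix}$ and $B=\begin{bmatrix} J_{k_1,k_2} & 0 & X_1\\ 0 & J_{k_1,k_2} & X_2\\ X_3 & X_4 & Y\end{bmatrix}$ (with $k_1,k_2>0$, $\mathbf{1}^TX_1=\mathbf{1}^TX_2$, $X_3\mathbf{1}=X_4\mathbf{1}$) be Gram mates with all distinct singular values, where $\mathrm{rank}(A-B)=1$. Then, $A$ and $B$ are isomorphic if and only if the remaining matrix $Y$ is fixable.
   Context: $J_{p,q}$ is the $p\times q$ all-ones matrix. Two $(0,1)$ matrices $A\neq B$ are Gram mates if $AA^T=BB^T$ and $A^TA=B^TB$; isomorphic if $B=PAQ$ for permutation matrices $P,Q$. For $(0,1)$ matrices $Z_1,Z_2$ of equal size, $\mathcal R_{Z_1,Z_2}$ is the set of triples $(P_1,P_2,Q)$ of permutation matrices with $Z_2=P_1Z_1Q$ and $Z_1=P_2Z_2Q$, and $\mathcal L_{Z_1,Z_2}$ is the set of triples $(P,Q_1,Q_2)$ of permutation matrices with $Z_1=PZ_1Q_1$ and $Z_2=PZ_2Q_2$. $Y$ is fixable if there exist permutation matrices $P,Q$ with $Y=PYQ$ such that either (i) $(P_1,P_2,Q)\in\mathcal R_{X_1,X_2}$ and $(P,Q_3,Q_4)\in\mathcal L_{X_3,X_4}$ for some $P_1,P_2,Q_3,Q_4$, or (ii) $(Q_3,Q_4,P^T)\in\mathcal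 R_{X_3^T,X_4^T}$ and $(Q^T,P_1,P_2)\in\mathcal L_{X_1^T,X_2^T}$ for some $P_1,P_2,Q_3,Q_4$. *)

(* Defs.v *)
From HB Require Import structures.
From mathcomp Require Import all_boot all_order all_algebra.
Set Implicit Arguments. Unset Strict Implicit. Unset Printing Implicit Defensive.
Import Order.TTheory GRing.Theory Num.Theory.
Local Open Scope ring_scope.

Section Defs.
Variable R : rcfType.

Definition is01 (a b : nat) (M : 'M[R]_(a, b)) : Prop :=
  forall i j, M i j = 0 \/ M i j = 1.

Definition Jmx (p q : nat) : 'M[R]_(p, q) := const_mx 1.

Definition gram_mates (a b : nat) (A B : 'M[R]_(a, b)) : Prop :=
  [/\ A <> B, A *m A^T = B *m B^T & A^T *m A = B^T *m B].

Definition mx_isomorphic (a b : nat) (A B : 'M[R]_(a, b)) : Prop :=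
  exists (P : 'M[R]_a) (Q : 'M[R]_b),
    [/\ is_perm_mx P, is_perm_mx Q & B = P *m A *m Q].

(* The singular values of A (the square roots of the eigenvalues of A A^T,
   counted with algebraic multiplicity) are pairwise distinct, i.e. every
   eigenvalue of A A^T has algebraic multiplicity at most one. Since A A^T is
   symmetric, its characteristic polynomial splits over the real closed R. *)
Definition distinct_singular_values (n : nat) (A : 'M[R]_n) : Prop :=
  forall x : R, (mup x (char_poly (A *m A^T)) <= 1)%N.

Definition inRset (a b : nat) (Z1 Z2 : 'M[R]_(a, b))
  (P1 P2 : 'M[R]_a) (Q : 'M[R]_b) : Prop :=
  [/\ is_perm_mx P1, is_perm_mx P2, is_perm_mx Q,
      Z2 = P1 *m Z1 *m Q & Z1 = P2 *m Z2 *m Q].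

Definition inLset (a b : nat) (Z1 Z2 : 'M[R]_(a, b))
  (P : 'M[R]_a) (Q1 Q2 : 'M[R]_b) : Prop :=
  [/\ is_perm_mx P, is_perm_mx Q1, is_perm_mx Q2,
      Z1 = P *m Z1 *m Q1 & Z2 = P *m Z2 *m Q2].

Definition fixable (k1 k2 m p : nat)
  (X1 X2 : 'M[R]_(k1, p)) (X3 X4 : 'M[R]_(m, k2)) (Y : 'M[R]_(m, p)) : Prop :=
  exists (P : 'M[R]_m) (Q : 'M[R]_p),
    [/\ is_perm_mx P, is_perm_mx Q, Y = P *m Y *m Q &
      ((exists P1 P2, inRset X1 X2 P1 P2 Q) /\
       (exists Q3 Q4, inLset X3 X4 P Q3 Q4))
      \/
      ((exists Q3 Q4, inRset X3^T X4^T Q3 Q4 P^T) /\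
       (exists P1 P2, inLset X1^T X2^T Q^T P1 P2))].

End Defs.

(* Main.v *)
Require Import Defs.
From HB Require Import structures.
From mathcomp Require Import all_boot all_order all_algebra.
From mathcomp Require Import ring lra fingroup perm.
Set Implicit Arguments. Unset Strict Implicit. Unset Printing Implicit Defensive.
Import Order.TTheory GRing.Theory Num.Theory.
Local Open Scope ring_scope.


Lemma mup2 (F : fieldType) N (S : 'M[F]_N) (lam : F) (y z : 'cV_N) (i j : 'I_N) :
  i != j -> y i 0 = 1 -> y j 0 = 0 -> z i 0 = 0 -> z j 0 = 1 ->
  S *m y = lam *: y -> S *m z = lam *: z -> (1 < mup lam (char_poly S))%N.
Proof.
move=> nij yi yj zi zj Sy Sz.
have nji : j != i by rewrite eq_sym.
pose V : 'M[F]_N := \matrix_(a, b) if b == i then y a 0 else if b == j then z a 0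
  else (a == b)%:R.
pose Nm := V - 1%:M.
have NE a b : Nm a b = if b == i then y a 0 - (a == b)%:R else
   if b == j then z a 0 - (a == b)%:R else 0.
  rewrite !mxE; case: ifP => _ //; case: ifP => _ //; by rewrite subrr.
have NN : Nm *m Nm = 0.
  apply/matrixP => a b; rewrite mxE [RHS]mxE; apply: big1 => c _.
  rewrite !NE.
  case: (eqVneq c i) => [?|ci]; [|case: (eqVneq c j) => [?|cj]]; try subst c.
  - case: (eqVneq b i) => [?|bi]; first by subst b; rewrite ?eqxx yi subrr mulr0.
    case: (eqVneq b j) => [?|bj]; last by rewrite mulr0.
    by subst b; rewrite ?eqxx zi ?(negbTE nij) ?(negbTE nji) subrr mulr0.
  - case: (eqVneq b i) => [?|bi].
      by subst b; rewrite ?eqxx yj ?(negbTE nij) ?(negbTE nji) subrr mulr0.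
    case: (eqVneq b j) => [?|bj]; last by rewrite mulr0.
    by subst b; rewrite ?eqxx zj subrr mulr0.
  - by rewrite mul0r.
have detV : \det V != 0.
  have VE : V = 1%:M + Nm by rewrite /Nm addrC subrK.
  have : V *m (1%:M - Nm) = 1%:M.
    by rewrite VE mulmxDl mul1mx mulmxBr mulmx1 NN subr0 subrK.
  move/(congr1 determinant); rewrite det_mulmx det1.
  move=> h; apply/eqP => d0; move: h; rewrite d0 mul0r => /eqP.
  by rewrite eq_sym oner_eq0.
pose M := char_poly_mx S.
pose yp := map_mx polyC y; pose zp := map_mx polyC z.
have Meig (w : 'cV_N) : S *m w = lam *: w ->
    M *m map_mx polyC w = ('X - lam%:P) *: map_mx polyC w.
  move=> Sw; rewrite /M /char_poly_mx mulmxBl mul_scalar_mx -map_mxM Sw map_mxZ.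
  by rewrite scalerBl.
pose K : 'M[{poly F}]_N := \matrix_(a, b) if b == i then yp a 0 else if b == j then zp a 0 else M a b.
pose d : 'rV[{poly F}]_N := \row_b (if (b == i) || (b == j) then 'X - lam%:P else 1).
have E : M *m map_mx polyC V = K *m diag_mx d.
  apply/matrixP => a b; rewrite mul_mx_diag [RHS]mxE.
  case: (eqVneq b i) => [->|bi].
    have -> : (M *m map_mx polyC V) a i = (M *m yp) a 0.
      by rewrite !mxE; apply: eq_bigr => c _; rewrite !mxE eqxx.
    by rewrite Meig // !mxE !eqxx /= mulrC.
  case: (eqVneq b j) => [->|bj].
    have -> : (M *m map_mx polyC V) a j = (M *m zp) a 0.
      by rewrite !mxE; apply: eq_bigr => c _; rewrite !mxE eqxx (negbTE nji).
    by rewrite Meig // !mxE eqxx (negbTE nji) orbT /= mulrC.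
  have -> : (M *m map_mx polyC V) a b = (M *m 1%:M) a b.
    by rewrite !mxE; apply: eq_bigr => c _; rewrite !mxE (negbTE bi) (negbTE bj) polyC_natr.
  by rewrite mulmx1 !mxE (negbTE bi) (negbTE bj) /= mulr1.
have := congr1 determinant E.
rewrite !det_mulmx det_map_mx det_diag (bigD1 i) // (bigD1 j) //= big1; last first.
  by move=> b /andP [bi bj]; rewrite mxE (negbTE bi) (negbTE bj) .
rewrite !mxE eqxx (negbTE nji) eqxx orbT /= mulr1 => h.
have : ('X - lam%:P) ^+ 2 %| char_poly S.
  rewrite -(dvdpZr _ _ detV) -mul_polyC mulrC /char_poly -/M h.
  by rewrite dvdp_mull // expr2.
by rewrite -mup_geq // monic_neq0 // char_poly_monic.
Qed.

Lemma eig_line (F : fieldType) N (S : 'M[F]_N) lam (u x : 'cV_N) (i0 : 'I_N) :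
  S *m u = lam *: u -> S *m x = lam *: x -> u i0 0 != 0 ->
  (mup lam (char_poly S) <= 1)%N ->
  x = (x i0 0 / u i0 0) *: u.
Proof.
move=> Su Sx ui0 hm.
set c := x i0 0 / u i0 0.
have eigB (a b : 'cV_N) (e : F) : S *m a = lam *: a -> S *m b = lam *: b ->
    S *m (a - e *: b) = lam *: (a - e *: b).
  move=> Sa Sb; rewrite mulmxBr -scalemxAr Sa Sb scalerBr !scalerA mulrC //.
have eigZ (a : 'cV_N) (e : F) : S *m a = lam *: a -> S *m (e *: a) = lam *: (e *: a).
  by move=> Sa; rewrite -scalemxAr Sa !scalerA mulrC.
pose x' := x - c *: u.
have Sx' : S *m x' = lam *: x' by apply: eigB.
have x'i0 : x' i0 0 = 0 by rewrite !mxE /c divfK // subrr.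
case: (eqVneq x' 0) => [/eqP|nz]; first by rewrite subr_eq0 => /eqP.
have [j xj] : exists j, x' j 0 != 0.
  case: (boolP [exists j, x' j 0 != 0]) => [/existsP //|H].
  case/eqP: nz; apply/matrixP => a b; rewrite (ord1 b) [RHS]mxE.
  apply/eqP/negPn/negP => hn; case/negP: H; by apply/existsP; exists a.
have nij : i0 != j by apply: contraNneq xj => <-; rewrite x'i0.
pose z := (x' j 0)^-1 *: x'.
pose y := (u i0 0)^-1 *: (u - u j 0 *: z).
have zi : z i0 0 = 0 by rewrite mxE x'i0 mulr0.
have zj : z j 0 = 1 by rewrite mxE mulVf.
have yE a : y a 0 = (u i0 0)^-1 * (u a 0 - u j 0 * z a 0).
  by rewrite /y /z !mxE.
have yi : y i0 0 = 1 by rewrite yE zi mulr0 subr0 mulVf.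
have yj : y j 0 = 0 by rewrite yE zj mulr1 subrr mulr0.
have Sz : S *m z = lam *: z by apply: eigZ.
have Sy : S *m y = lam *: y by apply: eigZ; apply: eigB.
by have := mup2 nij yi yj zi zj Sy Sz; rewrite ltnNge hm.
Qed.


Section Blocks.
Variable R : rcfType.

Definition wv k m : 'cV[R]_(k + k + m) := col_mx (col_mx (const_mx (-1)) (const_mx 1)) 0.
Definition pat k m N (e : (k + k + m)%N = N) (x : 'I_N) : R :=
  (castmx (e, erefl 1%N) (wv k m)) x 0.
Definition r1 k m N (e : (k + k + m)%N = N) (a : 'I_k) : 'I_N :=
  cast_ord e (lshift m (lshift k a)).
Definition r2 k m N (e : (k + k + m)%N = N) (a : 'I_k) : 'I_N :=
  cast_ord e (lshift m (rshift k a)).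
Definition r3 k m N (e : (k + k + m)%N = N) (c : 'I_m) : 'I_N :=
  cast_ord e (rshift (k + k) c).

Lemma idx_cases k m N (e : (k + k + m)%N = N) (x : 'I_N) :
  [\/ exists a, x = r1 e a, exists a, x = r2 e a | exists c, x = r3 e c].
Proof.
have := splitK (cast_ord (esym e) x); case: (split _) => [y|c] /= H.
  have := splitK y; case: (split y) => [a|a] /= Hy.
    by constructor 1; exists a; rewrite /r1 -[x](cast_ordKV e) -H -Hy.
  by constructor 2; exists a; rewrite /r2 -[x](cast_ordKV e) -H -Hy.
by constructor 3; exists c; rewrite /r3 -[x](cast_ordKV e) -H.
Qed.

Lemma pat1 k m N (e : (k + k + m)%N = N) a : pat e (r1 e a) = -1.
Proof. by rewrite /pat castmxE /= cast_ordK cast_ord_id col_mxEu col_mxEu mxE. Qed.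
Lemma pat2 k m N (e : (k + k + m)%N = N) a : pat e (r2 e a) = 1.
Proof. by rewrite /pat castmxE /= cast_ordK cast_ord_id col_mxEu col_mxEd mxE. Qed.
Lemma pat3 k m N (e : (k + k + m)%N = N) c : pat e (r3 e c) = 0.
Proof. by rewrite /pat castmxE /= cast_ordK cast_ord_id col_mxEd mxE. Qed.

Lemma n1_neq1 : (-1 : R) <> 1. Proof. by move=> h; lra. Qed.
Lemma n1_neq0 : (-1 : R) <> 0. Proof. by move=> h; lra. Qed.
Lemma one_neq0 : (1 : R) <> 0. Proof. by move=> h; lra. Qed.

Lemma patP1 k m N (e : (k + k + m)%N = N) x : pat e x = -1 -> exists a, x = r1 e a.
Proof.
case: (idx_cases e x) => -[a ->]; rewrite ?pat1 ?pat2 ?pat3; try by exists a.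
  by move/esym/n1_neq1.
by move/esym/n1_neq0.
Qed.
Lemma patP2 k m N (e : (k + k + m)%N = N) x : pat e x = 1 -> exists a, x = r2 e a.
Proof.
case: (idx_cases e x) => -[a ->]; rewrite ?pat1 ?pat2 ?pat3; try by exists a.
  by move/n1_neq1.
by move/esym/one_neq0.
Qed.
Lemma patP3 k m N (e : (k + k + m)%N = N) x : pat e x = 0 -> exists a, x = r3 e a.
Proof.
case: (idx_cases e x) => -[a ->]; rewrite ?pat1 ?pat2 ?pat3; try by exists a.
  by move/n1_neq0.
by move/one_neq0.
Qed.

Lemma r1_inj k m N (e : (k + k + m)%N = N) : injective (r1 e).
Proof. by move=> a b /cast_ord_inj /lshift_inj /lshift_inj. Qed.
Lemma r2_inj k m N (e : (k + k + m)%N = N) : injective (r2 e).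
Proof. by move=> a b /cast_ord_inj /lshift_inj /rshift_inj. Qed.
Lemma r3_inj k m N (e : (k + k + m)%N = N) : injective (r3 e).
Proof. by move=> a b /cast_ord_inj /rshift_inj. Qed.


Definition blk k1 k2 m p (Z : 'M[R]_(k1 + k1, k2 + k2)) (X1 X2 : 'M[R]_(k1, p))
  (X3 X4 : 'M[R]_(m, k2)) (Y : 'M[R]_(m, p)) : 'M[R]_(k1 + k1 + m, k2 + k2 + p) :=
  block_mx Z (col_mx X1 X2) (row_mx X3 X4) Y.

Section BlkE.
Variables (k1 k2 m p N : nat) (er : (k1 + k1 + m)%N = N) (ec : (k2 + k2 + p)%N = N).
Variables (Z : 'M[R]_(k1 + k1, k2 + k2)) (X1 X2 : 'M[R]_(k1, p))
  (X3 X4 : 'M[R]_(m, k2)) (Y : 'M[R]_(m, p)).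
Let M := castmx (er, ec) (blk Z X1 X2 X3 X4 Y).
Lemma blkE1 a c : M (r1 er a) (r3 ec c) = X1 a c.
Proof. by rewrite /M castmxE /= !cast_ordK block_mxEur col_mxEu. Qed.
Lemma blkE2 a c : M (r2 er a) (r3 ec c) = X2 a c.
Proof. by rewrite /M castmxE /= !cast_ordK block_mxEur col_mxEd. Qed.
Lemma blkE3 a c : M (r3 er a) (r1 ec c) = X3 a c.
Proof. by rewrite /M castmxE /= !cast_ordK block_mxEdl row_mxEl. Qed.
Lemma blkE4 a c : M (r3 er a) (r2 ec c) = X4 a c.
Proof. by rewrite /M castmxE /= !cast_ordK block_mxEdl row_mxEr. Qed.
Lemma blkEY a c : M (r3 er a) (r3 ec c) = Y a c.
Proof. by rewrite /M castmxE /= !cast_ordK block_mxEdr. Qed.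
End BlkE.

Lemma subperm k N (s : 'S_N) (e1 e2 : 'I_k -> 'I_N) : injective e1 ->
  (forall a, exists b, s (e1 a) = e2 b) -> exists sg : 'S_k, forall a, s (e1 a) = e2 (sg a).
Proof.
move=> inj1 H.
pose f a := odflt a [pick b | s (e1 a) == e2 b].
have fE a : s (e1 a) = e2 (f a).
  rewrite /f; case: pickP => [b /eqP //|H0].
  by have [b hb] := H a; move: (H0 b); rewrite hb eqxx.
have finj : injective f.
  by move=> a a' eq; apply: inj1; apply: (@perm_inj _ s); rewrite !fE eq.
by exists (perm finj) => a; rewrite permE.
Qed.

Lemma permMM_E a b (s : 'S_a) (t : 'S_b) (M : 'M[R]_(a, b)) i j :
  (perm_mx s *m M *m perm_mx t^-1) i j = M (s i) (t j).
Proof. by rewrite -col_permE -row_permE !mxE. Qed.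

Lemma caseI k1 k2 m p N (er : (k1 + k1 + m)%N = N) (ec : (k2 + k2 + p)%N = N)
  (Z1 Z2 : 'M[R]_(k1 + k1, k2 + k2)) (X1 X2 : 'M[R]_(k1, p))
  (X3 X4 : 'M[R]_(m, k2)) (Y : 'M[R]_(m, p)) (s t : 'S_N) :
  (forall i j, castmx (er, ec) (blk Z2 X1 X2 X3 X4 Y) i j =
               castmx (er, ec) (blk Z1 X1 X2 X3 X4 Y) (s i) (t j)) ->
  (forall i, pat er (s i) = - pat er i) -> (forall j, pat ec (t j) = pat ec j) ->
  exists P Q, [/\ is_perm_mx P, is_perm_mx Q, Y = P *m Y *m Q,
    (exists P1 P2, inRset X1 X2 P1 P2 Q) & (exists Q3 Q4, inLset X3 X4 P Q3 Q4)].
Proof.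
move=> H hs ht.
have [sg1 H1] : exists sg : 'S_k1, forall a, s (r1 er a) = r2 er (sg a).
  apply: subperm; first exact: r1_inj.
  by move=> a; apply: patP2; rewrite hs pat1 opprK.
have [sg2 H2] : exists sg : 'S_k1, forall a, s (r2 er a) = r1 er (sg a).
  apply: subperm; first exact: r2_inj.
  by move=> a; apply: patP1; rewrite hs pat2.
have [pi H3] : exists sg : 'S_m, forall a, s (r3 er a) = r3 er (sg a).
  apply: subperm; first exact: r3_inj.
  by move=> a; apply: patP3; rewrite hs pat3 oppr0.
have [ta1 T1] : exists sg : 'S_k2, forall a, t (r1 ec a) = r1 ec (sg a).
  apply: subperm; first exact: r1_inj.
  by move=> a; apply: patP1; rewrite ht pat1.
have [ta2 T2] : exists sg : 'S_k2, forall a, t (r2 ec a) = r2 ec (sg a).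
  apply: subperm; first exact: r2_inj.
  by move=> a; apply: patP2; rewrite ht pat2.
have [rho T3] : exists sg : 'S_p, forall a, t (r3 ec a) = r3 ec (sg a).
  apply: subperm; first exact: r3_inj.
  by move=> a; apply: patP3; rewrite ht pat3.
exists (perm_mx pi), (perm_mx rho^-1); split; try exact: perm_mx_is_perm.
- apply/matrixP => a c; rewrite permMM_E.
  by have := H (r3 er a) (r3 ec c); rewrite H3 T3 !blkEY.
- exists (perm_mx sg2), (perm_mx sg1); split; try exact: perm_mx_is_perm.
    apply/matrixP => a c; rewrite permMM_E.
    by have := H (r2 er a) (r3 ec c); rewrite H2 T3 blkE2 blkE1.
  apply/matrixP => a c; rewrite permMM_E.
  by have := H (r1 er a) (r3 ec c); rewrite H1 T3 blkE2 blkE1.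
- exists (perm_mx ta1^-1), (perm_mx ta2^-1); split; try exact: perm_mx_is_perm.
    apply/matrixP => a c; rewrite permMM_E.
    by have := H (r3 er a) (r1 ec c); rewrite H3 T1 !blkE3.
  apply/matrixP => a c; rewrite permMM_E.
  by have := H (r3 er a) (r2 ec c); rewrite H3 T2 !blkE4.
Qed.

End Blocks.


Section Conv.
Variable R : rcfType.

Lemma perm_mxE' n (s : 'S_n) i j : perm_mx s i j = (s i == j)%:R :> R.
Proof. by rewrite /perm_mx /row_perm !mxE. Qed.

Lemma lr_neq a b (x : 'I_a) (y : 'I_b) : (lshift b x == rshift a y) = false.
Proof. by apply/negbTE; rewrite eqE /= neq_ltn (leq_trans (ltn_ord x)) ?leq_addr. Qed.
Lemma rl_neq a b (x : 'I_a) (y : 'I_b) : (rshift a y == lshift b x) = false.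
Proof. by rewrite eq_sym lr_neq. Qed.

Lemma is_perm_block a b (s : 'S_a) (t : 'S_b) :
  is_perm_mx (block_mx (perm_mx s) 0 0 (perm_mx t) : 'M[R]_(a + b)).
Proof.
pose g (u : 'I_a + 'I_b) := match u with inl x => inl (s x) | inr y => inr (t y) end.
have ginj : injective g by case=> [x|y] [x'|y'] //= [] /perm_inj ->.
pose f i := unsplit (g (split i)).
have finj : injective f.
  by move=> i j /(can_inj unsplitK) /ginj /(can_inj splitK).
apply/is_perm_mxP; exists (perm finj); apply/matrixP => i j.
rewrite perm_mxE' permE /f -[i]splitK -[j]splitK unsplitK.
case: (split i) => x; case: (split j) => y /=.
- by rewrite block_mxEul perm_mxE' (inj_eq (@lshift_inj _ _)).
- by rewrite block_mxEur mxE lr_neq.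
- by rewrite block_mxEdl mxE rl_neq.
- by rewrite block_mxEdr perm_mxE' (inj_eq (@rshift_inj _ _)).
Qed.

Lemma is_perm_anti k (s t : 'S_k) :
  is_perm_mx (block_mx 0 (perm_mx s) (perm_mx t) 0 : 'M[R]_(k + k)).
Proof.
pose g (u : 'I_k + 'I_k) : 'I_k + 'I_k :=
  match u with inl x => inr (s x) | inr y => inl (t y) end.
have ginj : injective g by case=> [x|y] [x'|y'] //= [] /perm_inj ->.
pose f i := unsplit (g (split i)).
have finj : injective f.
  by move=> i j /(can_inj unsplitK) /ginj /(can_inj splitK).
apply/is_perm_mxP; exists (perm finj); apply/matrixP => i j.
rewrite perm_mxE' permE /f -[i]splitK -[j]splitK unsplitK.
case: (split i) => x; case: (split j) => y /=.
- by rewrite block_mxEul mxE rl_neq.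
- by rewrite block_mxEur perm_mxE' (inj_eq (@rshift_inj _ _)).
- by rewrite block_mxEdl perm_mxE' (inj_eq (@lshift_inj _ _)).
- by rewrite block_mxEdr mxE lr_neq.
Qed.


Lemma castmx_mul m m' n n' q q' (e1 : m = m') (e2 : n = n') (e3 : q = q')
  (M : 'M[R]_(m, n)) (M' : 'M[R]_(n, q)) :
  castmx (e1, e2) M *m castmx (e2, e3) M' = castmx (e1, e3) (M *m M').
Proof. by case: m' / e1; case: n' / e2; case: q' / e3; rewrite !castmx_id. Qed.

Lemma castmx_perm n n' (e : n = n') (M : 'M[R]_n) :
  is_perm_mx M -> is_perm_mx (castmx (e, e) M).
Proof. by case: n' / e; rewrite castmx_id. Qed.

Lemma perm_const a b (s : 'S_a) (c : R) :
  perm_mx s *m (const_mx c : 'M_(a, b)) = const_mx c.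
Proof. by rewrite -row_permE; apply/matrixP => i j; rewrite !mxE. Qed.
Lemma const_perm a b (s : 'S_b) (c : R) :
  (const_mx c : 'M_(a, b)) *m perm_mx s = const_mx c.
Proof. by rewrite -[s]invgK -col_permE; apply/matrixP => i j; rewrite !mxE. Qed.

Lemma convI k1 k2 m p N (er : (k1 + k1 + m)%N = N) (ec : (k2 + k2 + p)%N = N)
  (X1 X2 : 'M[R]_(k1, p)) (X3 X4 : 'M[R]_(m, k2)) (Y : 'M[R]_(m, p)) P Q :
  is_perm_mx P -> is_perm_mx Q -> Y = P *m Y *m Q ->
  (exists P1 P2, inRset X1 X2 P1 P2 Q) -> (exists Q3 Q4, inLset X3 X4 P Q3 Q4) ->
  mx_isomorphic
    (castmx (er, ec) (blk (block_mx 0 (Jmx R k1 k2) (Jmx R k1 k2) 0) X1 X2 X3 X4 Y))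
    (castmx (er, ec) (blk (block_mx (Jmx R k1 k2) 0 0 (Jmx R k1 k2)) X1 X2 X3 X4 Y)).
Proof.
move=> hP hQ eY [P1 [P2 [hP1 hP2 _ e2 e1]]] [Q3 [Q4 [_ hQ3 hQ4 e3 e4]]].
case/is_perm_mxP: hP => sP eP; case/is_perm_mxP: hQ => sQ eQ.
case/is_perm_mxP: hP1 => s1 eP1; case/is_perm_mxP: hP2 => s2 eP2.
case/is_perm_mxP: hQ3 => s3 eQ3; case/is_perm_mxP: hQ4 => s4 eQ4.
subst P1 P2 Q3 Q4.
exists (castmx (er, er) (block_mx (block_mx 0 (perm_mx s2) (perm_mx s1) 0) 0 0 P)).
exists (castmx (ec, ec) (block_mx (block_mx (perm_mx s3) 0 0 (perm_mx s4)) 0 0 Q)).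
split.
- apply: castmx_perm; rewrite eP.
  have /is_perm_mxP [u ->] := @is_perm_anti _ s2 s1.
  exact: is_perm_block.
- apply: castmx_perm.
  have /is_perm_mxP [u ->] := @is_perm_block _ _ s3 s4.
  by rewrite eQ; apply: is_perm_block.
rewrite !castmx_mul; congr castmx.
rewrite /blk !(mulmx_block, mul_block_col, mul_row_block, mul_col_mx, mul_mx_row,
  mul_row_col, mul0mx, mulmx0, add0r, addr0).
rewrite eP eQ /Jmx !(perm_const, const_perm).
by rewrite -eP -eQ -e1 -e2 -e3 -e4 -eY.
Qed.

End Conv.


Section Comp.
Variable R : rcfType.

Lemma Jmul a b (c : R) :
  (const_mx 1 : 'M_(a, b)) *m (const_mx c : 'M_(b, 1)) = const_mx (b%:R * c).
Proof.
apply/matrixP => i j; rewrite !mxE; under eq_bigr do rewrite !mxE mul1r.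
by rewrite sumr_const card_ord mulr_natl.
Qed.

Lemma constN a b (c : R) : (const_mx (- c) : 'M_(a, b)) = - const_mx c.
Proof. by apply/matrixP => i j; rewrite !mxE. Qed.

Lemma F1 k1 k2 m p (X1 X2 : 'M[R]_(k1, p)) (X3 X4 : 'M[R]_(m, k2)) (Y : 'M[R]_(m, p)) :
  X3 *m (const_mx 1 : 'M[R]_(k2, 1)) = X4 *m (const_mx 1 : 'M[R]_(k2, 1)) ->
  blk (block_mx 0 (const_mx 1) (const_mx 1) 0) X1 X2 X3 X4 Y *m wv R k2 p
   = - k2%:R *: wv R k1 m.
Proof.
move=> h; rewrite /blk /wv !(mul_block_col, mul_row_col, mulmx0, mul0mx, addr0, add0r).
rewrite !scale_col_mx scaler0 !Jmul constN mulmxN h addNr.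
by congr col_mx; congr col_mx; apply/matrixP => i j; rewrite !mxE; lra.
Qed.

Lemma F3 k1 k2 m p (X1 X2 : 'M[R]_(k1, p)) (X3 X4 : 'M[R]_(m, k2)) (Y : 'M[R]_(m, p)) :
  X3 *m (const_mx 1 : 'M[R]_(k2, 1)) = X4 *m (const_mx 1 : 'M[R]_(k2, 1)) ->
  blk (block_mx (const_mx 1) 0 0 (const_mx 1)) X1 X2 X3 X4 Y *m wv R k2 p
   = k2%:R *: wv R k1 m.
Proof.
move=> h; rewrite /blk /wv !(mul_block_col, mul_row_col, mulmx0, mul0mx, addr0, add0r).
rewrite !scale_col_mx scaler0 !Jmul constN mulmxN h addNr.
by congr col_mx; congr col_mx; apply/matrixP => i j; rewrite !mxE; lra.
Qed.

Lemma tr_blk k1 k2 m p (Z : 'M[R]_(k1 + k1, k2 + k2)) (X1 X2 : 'M[R]_(k1, p))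
  (X3 X4 : 'M[R]_(m, k2)) (Y : 'M[R]_(m, p)) :
  (blk Z X1 X2 X3 X4 Y)^T = blk Z^T X3^T X4^T X1^T X2^T Y^T.
Proof. by rewrite /blk tr_block_mx tr_col_mx tr_row_mx. Qed.

Lemma trZ1 k1 k2 : (block_mx 0 (Jmx R k1 k2) (Jmx R k1 k2) 0)^T
   = block_mx 0 (Jmx R k2 k1) (Jmx R k2 k1) 0.
Proof. by rewrite tr_block_mx !trmx0 /Jmx trmx_const. Qed.
Lemma trZ2 k1 k2 : (block_mx (Jmx R k1 k2) 0 0 (Jmx R k1 k2))^T
   = block_mx (Jmx R k2 k1) 0 0 (Jmx R k2 k1).
Proof. by rewrite tr_block_mx !trmx0 /Jmx trmx_const. Qed.

Lemma castmxZ m m' n n' (e1 : m = m') (e2 : n = n') c (M : 'M[R]_(m, n)) :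
  castmx (e1, e2) (c *: M) = c *: castmx (e1, e2) M.
Proof. by case: m' / e1; case: n' / e2; rewrite !castmx_id. Qed.

End Comp.


Section Main.
Variable R : rcfType.

Lemma permTP n (s : 'S_n) : (perm_mx s)^T *m perm_mx s = 1%:M :> 'M[R]_n.
Proof. by rewrite tr_perm_mx -perm_mxM mulVg perm_mx1. Qed.
Lemma permPT n (s : 'S_n) : perm_mx s *m (perm_mx s)^T = 1%:M :> 'M[R]_n.
Proof. by rewrite tr_perm_mx -perm_mxM mulgV perm_mx1. Qed.

Lemma solve_m1 (e : R) : -1 = e * -1 -> e = 1. Proof. by move=> h; lra. Qed.
Lemma solve_1 (e : R) : 1 = e * -1 -> e = -1. Proof. by move=> h; lra. Qed.
Lemma solve_0 (e : R) : 0 = e * -1 -> e = 0. Proof. by move=> h; lra. Qed.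
Lemma solve_d (e : R) : e * -1 = -1 -> e = 1. Proof. by move=> h; lra. Qed.

Lemma fwd k1 k2 m p N (er : (k1 + k1 + m)%N = N) (ec : (k2 + k2 + p)%N = N)
  (X1 X2 : 'M[R]_(k1, p)) (X3 X4 : 'M[R]_(m, k2)) (Y : 'M[R]_(m, p)) (A B : 'M[R]_N) :
  (0 < k1)%N -> (0 < k2)%N ->
  A = castmx (er, ec) (blk (block_mx 0 (Jmx R k1 k2) (Jmx R k1 k2) 0) X1 X2 X3 X4 Y) ->
  B = castmx (er, ec) (blk (block_mx (Jmx R k1 k2) 0 0 (Jmx R k1 k2)) X1 X2 X3 X4 Y) ->
  (const_mx 1 : 'M[R]_(1, k1)) *m X1 = (const_mx 1 : 'M[R]_(1, k1)) *m X2 ->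
  X3 *m (const_mx 1 : 'M[R]_(k2, 1)) = X4 *m (const_mx 1 : 'M[R]_(k2, 1)) ->
  A *m A^T = B *m B^T -> A^T *m A = B^T *m B ->
  distinct_singular_values A -> mx_isomorphic A B -> fixable X1 X2 X3 X4 Y.
Proof.
move=> k1p k2p eA eB h12 h34 gA gB hds [P [Q [hP hQ eBPQ]]].
case/is_perm_mxP: hP => s eP; case/is_perm_mxP: hQ => t eQ.
pose u := castmx (er, erefl 1%N) (wv R k1 m).
pose w := castmx (ec, erefl 1%N) (wv R k2 p).
have h12' : X1^T *m (const_mx 1 : 'M[R]_(k1, 1)) = X2^T *m (const_mx 1 : 'M[R]_(k1, 1)).
  by rewrite -[const_mx 1](trmx_const 1) -!trmx_mul h12.
have Aw : A *m w = - k2%:R *: u.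
  by rewrite eA /w castmx_mul F1 // castmxZ.
have ATu : A^T *m u = - k1%:R *: w.
  by rewrite eA trmx_cast /= castmx_mul tr_blk trZ1 F1 // castmxZ.
have Bw : B *m w = k2%:R *: u.
  by rewrite eB /w castmx_mul F3 // castmxZ.
pose lam : R := (k1 * k2)%:R.
have lam0 : lam != 0 by rewrite pnatr_eq0 muln_eq0 negb_or -!lt0n k1p k2p.
pose S := A *m A^T.
have Su : S *m u = lam *: u.
  by rewrite /S -mulmxA ATu -scalemxAr Aw scalerA mulrNN /lam natrM.
have Tw : A^T *m A *m w = lam *: w.
  by rewrite -mulmxA Aw -scalemxAr ATu scalerA mulrNN /lam natrM [in RHS]mulrC.
have QQ : Q *m Q^T = 1%:M by rewrite eQ permPT.
have PtP : P^T *m P = 1%:M by rewrite eP permTP.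
have SP : S *m P = P *m S.
  have e : S = P *m S *m P^T.
    rewrite /S {1}gA eBPQ !trmx_mul !mulmxA.
    by rewrite -[P *m A *m Q *m Q^T]mulmxA QQ mulmx1.
  by rewrite {1}e -mulmxA PtP mulmx1.
pose T := A^T *m A.
have TQ : T *m Q = Q *m T.
  have e : T = Q^T *m T *m Q.
    rewrite /T {1}gB eBPQ !trmx_mul !mulmxA.
    by rewrite -[Q^T *m A^T *m P^T *m P]mulmxA PtP mulmx1.
  by rewrite {2}e !mulmxA QQ mul1mx.
pose i0 := r1 er (Ordinal k1p).
have ui0 : u i0 0 = -1 by exact: pat1.
have ui0n : u i0 0 != 0 by rewrite ui0 oppr_eq0 oner_eq0.
have SPu : S *m (P *m u) = lam *: (P *m u) by rewrite mulmxA SP -mulmxA Su scalemxAr.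
have ePu := eig_line Su SPu ui0n (hds lam).
set eps := (P *m u) i0 0 / u i0 0 in ePu.
pose x := A *m (Q *m w).
have Sx : S *m x = lam *: x.
  have -> : S *m x = A *m (T *m Q *m w) by rewrite /S /x /T !mulmxA.
  by rewrite TQ -mulmxA Tw -!scalemxAr.
have ex := eig_line Su Sx ui0n (hds lam).
set c := x i0 0 / u i0 0 in ex.
have Qw : Q *m w = (lam^-1 * (c * - k1%:R)) *: w.
  have h1 : T *m (Q *m w) = lam *: (Q *m w).
    by rewrite mulmxA TQ -mulmxA Tw scalemxAr.
  have h2 : T *m (Q *m w) = (c * - k1%:R) *: w.
    have ex' : A *m (Q *m w) = c *: u by exact: ex.
    by rewrite /T -mulmxA ex' -scalemxAr ATu scalerA.
  by rewrite -scalerA -h2 h1 scalerA mulVf // scale1r.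
set delta := lam^-1 * (c * - k1%:R) in Qw.
have Bw' : B *m w = (delta * (- k2%:R * eps)) *: u.
  by rewrite eBPQ -!mulmxA Qw -!scalemxAr Aw -scalemxAr ePu !scalerA -mulrA.
have de : delta * eps = -1.
  have := congr1 (fun M : 'cV_N => M i0 0) (etrans (esym Bw) Bw').
  rewrite /= !mxE ui0 => h.
  have k2n : (k2%:R : R) != 0 by rewrite pnatr_eq0 -lt0n.
  apply: (mulfI k2n).
  transitivity (delta * (- k2%:R * eps) * -1); first by ring.
  by rewrite -h.
have hs i : pat R er (s i) = eps * pat R er i.
  have := congr1 (fun M : 'cV_N => M i 0) ePu.
  by rewrite /= eP -row_permE !mxE.
have ht j : pat R ec (t j) = delta * pat R ec j.
  have := congr1 (fun M : 'cV_N => M j 0) Qw.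
  by rewrite /= eQ -row_permE !mxE.
have BE i j : B i j = A (s i) ((t^-1)%g j).
  by rewrite eBPQ eP eQ -{1}[t]invgK permMM_E.
have hs0 := hs i0; rewrite [pat R er i0]pat1 in hs0.
case: (idx_cases er (s i0)) => -[a ea]; rewrite ea ?pat1 ?pat2 ?pat3 in hs0.
-
  have e1 := solve_m1 hs0.
  have d1 : delta = -1 by move: de; rewrite e1 mulr1.
  have ATE : A^T = castmx (ec, er)
      (blk (block_mx 0 (Jmx R k2 k1) (Jmx R k2 k1) 0) X3^T X4^T X1^T X2^T Y^T).
    by rewrite eA trmx_cast tr_blk trZ1.
  have BTE : B^T = castmx (ec, er)
      (blk (block_mx (Jmx R k2 k1) 0 0 (Jmx R k2 k1)) X3^T X4^T X1^T X2^T Y^T).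
    by rewrite eB trmx_cast tr_blk trZ2.
  have := @caseI R k2 k1 p m N ec er (block_mx 0 (Jmx R k2 k1) (Jmx R k2 k1) 0)
    (block_mx (Jmx R k2 k1) 0 0 (Jmx R k2 k1)) X3^T X4^T X1^T X2^T Y^T (t^-1)%g s.
  case.
  + by move=> i j; rewrite -ATE -BTE !mxE; exact: BE.
  + move=> i; have := ht ((t^-1)%g i); rewrite permKV d1 => ->.
    by rewrite mulN1r opprK.
  + by move=> j; rewrite hs e1 mul1r.
  move=> P' [Q' [hP' hQ' eY hR hL]].
  exists Q'^T, P'^T; split; rewrite ?is_perm_mx_tr //.
    by apply: trmx_inj; rewrite !trmx_mul !trmxK mulmxA -eY.
  by right; rewrite !trmxK; split.
-
  have e1 := solve_1 hs0.
  have d1 : delta = 1 by apply: solve_d; move: de; rewrite e1.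
  have := @caseI R k1 k2 m p N er ec (block_mx 0 (Jmx R k1 k2) (Jmx R k1 k2) 0)
    (block_mx (Jmx R k1 k2) 0 0 (Jmx R k1 k2)) X1 X2 X3 X4 Y s (t^-1)%g.
  case.
  + by move=> i j; rewrite -eA -eB; exact: BE.
  + by move=> i; rewrite hs e1 mulN1r.
  + by move=> j; have := ht ((t^-1)%g j); rewrite permKV d1 mul1r => ->.
  move=> P' [Q' [hP' hQ' eY hR hL]].
  by exists P', Q'; split => //; left; split.
- have e0 := solve_0 hs0.
  by move: de; rewrite e0 mulr0 => /esym/n1_neq0.
Qed.
End Main.

Unset Implicit Arguments.
Set Strict Implicit.

Theorem theorem6p10 (R : rcfType) (n k1 k2 m p : nat)
  (eqr : ((k1 + k1) + m)%N = n) (eqc : ((k2 + k2) + p)%N = n)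
  (X1 X2 : 'M[R]_(k1, p)) (X3 X4 : 'M[R]_(m, k2)) (Y : 'M[R]_(m, p))
  (A B : 'M[R]_n) :
  (0 < k1)%N -> (0 < k2)%N ->
  A = castmx (eqr, eqc)
        (block_mx (block_mx 0 (Jmx R k1 k2) (Jmx R k1 k2) 0)
                  (col_mx X1 X2) (row_mx X3 X4) Y) ->
  B = castmx (eqr, eqc)
        (block_mx (block_mx (Jmx R k1 k2) 0 0 (Jmx R k1 k2))
                  (col_mx X1 X2) (row_mx X3 X4) Y) ->
  is01 A -> is01 B ->
  (const_mx 1 : 'M[R]_(1, k1)) *m X1 = (const_mx 1 : 'M[R]_(1, k1)) *m X2 ->
  X3 *m (const_mx 1 : 'M[R]_(k2, 1)) = X4 *m (const_mx 1 : 'M[R]_(k2, 1)) ->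
  gram_mates A B ->
  distinct_singular_values A ->
  \rank (A - B) = 1%N ->
  (mx_isomorphic A B <-> fixable X1 X2 X3 X4 Y).
Proof.
move=> k1p k2p eA eB _ _ h12 h34 [_ gA gB] hds _.
have eA' : A = castmx (eqr, eqc)
  (blk (block_mx 0 (Jmx R k1 k2) (Jmx R k1 k2) 0) X1 X2 X3 X4 Y) := eA.
have eB' : B = castmx (eqr, eqc)
  (blk (block_mx (Jmx R k1 k2) 0 0 (Jmx R k1 k2)) X1 X2 X3 X4 Y) := eB.
split.
  exact: (fwd k1p k2p eA' eB' h12 h34 gA gB hds).
case=> P [Q [hP hQ eY [[h1 h2]|[h1 h2]]]].
  by rewrite eA' eB'; exact: convI hP hQ eY h1 h2.
have ATE : A^T = castmx (eqc, eqr)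
    (blk (block_mx 0 (Jmx R k2 k1) (Jmx R k2 k1) 0) X3^T X4^T X1^T X2^T Y^T).
  by rewrite eA' trmx_cast tr_blk trZ1.
have BTE : B^T = castmx (eqc, eqr)
    (blk (block_mx (Jmx R k2 k1) 0 0 (Jmx R k2 k1)) X3^T X4^T X1^T X2^T Y^T).
  by rewrite eB' trmx_cast tr_blk trZ2.
have eYT : Y^T = Q^T *m Y^T *m P^T by rewrite {1}eY !trmx_mul mulmxA.
have := @convI R k2 k1 p m n eqc eqr X3^T X4^T X1^T X2^T Y^T Q^T P^T.
rewrite !is_perm_mx_tr -ATE -BTE => /(_ hQ hP eYT h1 h2) [P' [Q' [hP' hQ' e]]].
exists Q'^T, P'^T; split; rewrite ?is_perm_mx_tr //.
by apply: trmx_inj; rewrite e !trmx_mul !trmxK mulmxA.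
Qed.
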